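(* Let $R$ be a commutative ring, $n\ge m\ge1$, and $f(t)=a_0+a_1t+\cdots+a_nt^n$, $g(t)=b_0+b_1t+\cdots+b_mt^m$ in $R[t]$. Suppose there is a nonzero divisor $d\in R$, $d\neq 0$, with $\langle a_n,b_m\rangle=\langle d\rangle$. Then for each $j=0,\ldots,m-1$ there is an exact sequence of $R$-modules $$R/\langle d\rangle\to\mathrm{coker}(\psi_{j+1})\to\mathrm{coker}(\psi_j)\to R/\langle d\rangle\to0.$$ In particular, if $d=1$ then $\mathrm{coker}(\psi_j)\cong\mathrm{coker}(\psi_k)$ for all $j,k\in\{0,\ldots,m\}$.
   Context: For $k=0,\ldots,m-1$ put $f_k(t)=a_nt^{n-m+k}+a_{n-1}t^{n-m+k-1}+\cdots+a_{m-k}$, $g_k(t)=b_mt^k+b_{m-1}t^{k-1}+\cdots+b_{m-k}$, and $p_k(t)=g_k(t)f(t)-f_k(t)g(t)$ (of degree $\le n-1$). $R[t]_{\le e}$ denotes polynomials of degree $\le e$. For $j\in\{0,\ldots,m\}$, $\psi_j:R^j\oplus R[t]_{\le m-j-1}\oplus R[t]_{\le n-j-1}\to R[t]_{\le m+n-j-1}$ is the $R$-linear map sending the $i$-th standard basis vector $e_i$ of $R^j$ ($1\le i\le j$) to $p_{m-j+i-1}(t)$ and $(0,a(t),b(t))$ to $a(t)f(t)+b(t)g(t)$. ($\psi_0$ is the Sylvester map, $\psi_m$ the hybrid Bézout map.) *)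

(* Defs.v *)
From HB Require Import structures.
From mathcomp Require Import all_boot all_order all_algebra.
Set Implicit Arguments. Unset Strict Implicit. Unset Printing Implicit Defensive.
Import GRing.Theory.
Local Open Scope ring_scope.

Section Defs.
Variable R : comNzRingType.

Definition fk (f : {poly R}) (n m k : nat) : {poly R} :=
  \sum_(i < (n - m + k).+1) f`_(m - k + i) *: 'X^i.

Definition gk (g : {poly R}) (m k : nat) : {poly R} :=
  \sum_(i < k.+1) g`_(m - k + i) *: 'X^i.

Definition pk (f g : {poly R}) (n m k : nat) : {poly R} :=
  gk g m k * f - fk f n m k * g.

(* A module presented as a subquotient W/S inside an ambient R-module V:
   qm_amb = W (the elements), qm_sub = S (the submodule quotiented out). *)
Record qmod (V : lmodType R) := QMod { qm_amb : V -> Prop; qm_sub : V -> Prop }.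

(* coker(psi_j) = R[t]_{<= m+n-j-1} / im(psi_j), where
   psi_j(x, a, b) = sum_{i=1}^{j} x_i p_{m-j+i-1} + a f + b g,
   with deg a <= m-j-1 and deg b <= n-j-1  (size = degree + 1). *)
Definition im_psi (f g : {poly R}) (n m j : nat) (p : {poly R}) : Prop :=
  exists (x : 'I_j -> R) (a b : {poly R}),
    [/\ (size a <= m - j)%N, (size b <= n - j)%N &
        p = \sum_(i < j) x i *: pk f g n m (m - j + i) + a * f + b * g].

Definition coker_psi (f g : {poly R}) (n m j : nat) : qmod {poly R} :=
  QMod (fun p : {poly R} => (size p <= m + n - j)%N) (im_psi f g n m j).

Definition R_mod (d : R) : qmod R^o :=
  QMod (fun _ => True) (fun r : R^o => exists w : R, r = w * d).

Section Maps.
Variables (V U Y : lmodType R).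

Definition qmap (M : qmod V) (N : qmod U) (h : V -> U) : Prop :=
  (forall v, qm_amb M v -> qm_amb N (h v)) /\
  (forall v, qm_amb M v -> qm_sub M v -> qm_sub N (h v)).

Definition qexact_at (M1 : qmod Y) (M2 : qmod V) (M3 : qmod U)
  (h1 : Y -> V) (h2 : V -> U) : Prop :=
  forall v, qm_amb M2 v ->
    (qm_sub M3 (h2 v) <-> exists u, qm_amb M1 u /\ qm_sub M2 (v - h1 u)).

Definition qinj (M : qmod V) (N : qmod U) (h : V -> U) : Prop :=
  forall v, qm_amb M v -> qm_sub N (h v) -> qm_sub M v.

Definition qsurj (M : qmod V) (N : qmod U) (h : V -> U) : Prop :=
  forall u, qm_amb N u -> exists v, qm_amb M v /\ qm_sub N (u - h v).

Definition qiso (M : qmod V) (N : qmod U) : Prop :=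
  exists h : {linear V -> U}, [/\ qmap M N h, qinj M N h & qsurj M N h].
End Maps.
End Defs.

(* Main.v *)
Require Import Defs.
From HB Require Import structures.
From mathcomp Require Import all_boot all_order all_algebra.
From Stdlib Require Import Lia.
Set Implicit Arguments. Unset Strict Implicit. Unset Printing Implicit Defensive.
Import GRing.Theory.
Local Open Scope ring_scope.

Ltac nlia := change subn with Nat.sub in *; change addn with Nat.add in *; change predn with Nat.pred in *; lia.

Lemma leq_pred_add a b c d : (a <= c)%N -> (b <= d.+1)%N -> ((a + b).-1 <= c + d)%N.
Proof. move=> /leP ? /leP ?; apply/leP; nlia. Qed.

Section Aux.
Set Default Proof Using "All".
Variable R : comNzRingType.
Variables (n m : nat) (f g : {poly R}).
Hypotheses (hmn : (m <= n)%N) (hf : (size f <= n.+1)%N) (hg : (size g <= m.+1)%N).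

Local Notation I := (im_psi f g n m).

Lemma I0 j : I j 0.
Proof.
exists (fun _ => 0), 0, 0; rewrite !size_poly0; split => //.
by rewrite big1 ?mul0r ?addr0 // => i _; rewrite scale0r.
Qed.

Lemma ID j p q : I j p -> I j q -> I j (p + q).
Proof.
move=> [x1 [a1 [b1 [sa1 sb1 ->]]]] [x2 [a2 [b2 [sa2 sb2 ->]]]].
exists (fun i => x1 i + x2 i), (a1 + a2), (b1 + b2); split.
- by apply: leq_trans (size_polyD _ _) _; rewrite geq_max sa1.
- by apply: leq_trans (size_polyD _ _) _; rewrite geq_max sb1.
rewrite !mulrDl.
under [X in _ = X + _ + _]eq_bigr do rewrite scalerDl.
rewrite big_split /=.
by rewrite [LHS]addrACA [X in X + _ = _]addrACA.
Qed.

Lemma IZ j c p : I j p -> I j (c *: p).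
Proof.
move=> [x [a [b [sa sb ->]]]].
exists (fun i => c * x i), (c *: a), (c *: b); split.
- exact: leq_trans (size_scale_leq _ _) sa.
- exact: leq_trans (size_scale_leq _ _) sb.
rewrite !scalerDr scaler_sumr -!scalerAl; congr (_ + _ + _).
by apply: eq_bigr => i _; rewrite scalerA.
Qed.

Lemma IN j p : I j p -> I j (- p).
Proof. by move=> Ip; rewrite -scaleN1r; apply: IZ. Qed.

Lemma IB j p q : I j p -> I j q -> I j (p - q).
Proof. by move=> Ip Iq; apply: ID => //; apply: IN. Qed.

Lemma Isum j k (F : 'I_k -> {poly R}) : (forall i, I j (F i)) -> I j (\sum_(i < k) F i).
Proof.
move=> H; apply: (big_ind (I j)) => //; [exact: I0 | exact: ID].
Qed.

Lemma If j (a : {poly R}) : (size a <= m - j)%N -> I j (a * f).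
Proof.
move=> sa; exists (fun _ => 0), a, 0; split => //; first by rewrite size_poly0.
by rewrite big1 ?mul0r ?addr0 ?add0r // => i _; rewrite scale0r.
Qed.

Lemma Ig j (b : {poly R}) : (size b <= n - j)%N -> I j (b * g).
Proof.
move=> sb; exists (fun _ => 0), 0, b; split => //; first by rewrite size_poly0.
by rewrite big1 ?mul0r ?addr0 ?add0r // => i _; rewrite scale0r.
Qed.

Lemma Ip j i : (i < j)%N -> I j (pk f g n m (m - j + i)).
Proof.
move=> lij; exists (fun k : 'I_j => if k == Ordinal lij then 1 else 0), 0, 0.
rewrite size_poly0; split => //.
rewrite !mul0r !addr0 (bigD1 (Ordinal lij)) //= eqxx scale1r big1 ?addr0 //.
by move=> k /negbTE ->; rewrite scale0r.
Qed.


Lemma size_gk k : (size (gk g m k) <= k.+1)%N.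
Proof. by rewrite /gk -(poly_def _ (fun i => g`_(m - k + i))) size_poly. Qed.

Lemma size_fk k : (size (fk f n m k) <= (n - m + k).+1)%N.
Proof. by rewrite /fk -(poly_def _ (fun i => f`_(m - k + i))) size_poly. Qed.

Lemma gk_drop k : (k <= m)%N -> gk g m k = drop_poly (m - k) g.
Proof.
move=> km; apply/polyP => i; rewrite /gk -(poly_def _ (fun i => g`_(m - k + i))) coef_poly coef_drop_poly.
case: ltnP => hi; first by rewrite addnC.
rewrite nth_default //; apply: leq_trans hg _.
move/leP: hi => hi; move/leP: km => km; apply/leP; nlia.
Qed.

Lemma fk_drop k : (k <= m)%N -> fk f n m k = drop_poly (m - k) f.
Proof.
move=> km; apply/polyP => i; rewrite /fk -(poly_def _ (fun i => f`_(m - k + i))) coef_poly coef_drop_poly.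
case: ltnP => hi; first by rewrite addnC.
rewrite nth_default //; apply: leq_trans hf _.
move/leP: hi => hi; move/leP: km => km; move/leP: hmn => ?; apply/leP; nlia.
Qed.

Lemma size_pk k : (k <= m)%N -> (size (pk f g n m k) <= n)%N.
Proof.
move=> km; set s := (m - k)%N.
have Eg : drop_poly s g * 'X^s = g - take_poly s g.
  by apply/eqP; rewrite eq_sym subr_eq [_ + take_poly _ _]addrC poly_take_drop.
have Ef : drop_poly s f * 'X^s = f - take_poly s f.
  by apply/eqP; rewrite eq_sym subr_eq [_ + take_poly _ _]addrC poly_take_drop.
have E : pk f g n m k * 'X^s = take_poly s f * g - take_poly s g * f.
  rewrite /pk gk_drop // fk_drop // mulrBl (mulrAC _ f) (mulrAC _ g) Eg Ef.
  by rewrite !mulrBl (mulrC g f) opprB addrC addrA subrK.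
clearbody s.
have sz : (size (take_poly s f * g - take_poly s g * f)%R <= s + n)%N.
  apply: leq_trans (size_polyD _ _) _; rewrite size_polyN geq_max.
  apply/andP; split; apply: leq_trans (size_polyMleq _ _) _.
    apply: leq_trans (leq_pred_add (size_take_poly s f) hg) _.
    by rewrite leq_add2l.
  exact: leq_pred_add (size_take_poly s g) hf.
apply/leq_sizeP => i hi.
have := coefMXn s (pk f g n m k) (i + s).
rewrite ltnNge leq_addl /= addnK => <-.
rewrite E; apply: (leq_sizeP _ _ sz).
by rewrite addnC leq_add2r.
Qed.

Lemma Isize j p : (j <= m)%N -> I j p -> (size p <= m + n - j)%N.
Proof.
move=> jm [x [a [b [sa sb ->]]]].
apply: leq_trans (size_polyD _ _) _; rewrite geq_max; apply/andP; split;
  last first.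
  apply: leq_trans (size_polyMleq _ _) _.
  have := leq_add sb hg; move/leP => H; move/leP: jm => ?; move/leP: hmn => ?.
  apply/leP; nlia.
apply: leq_trans (size_polyD _ _) _; rewrite geq_max; apply/andP; split;
  last first.
  apply: leq_trans (size_polyMleq _ _) _.
  have := leq_add sa hf; move/leP => H; move/leP: jm => ?; move/leP: hmn => ?.
  apply/leP; nlia.
apply: (big_ind (fun q : {poly R} => size q <= m + n - j)%N).
- by rewrite size_poly0.
- by move=> p1 q1 hp hq; apply: leq_trans (size_polyD _ _) _; rewrite geq_max hp.
move=> i _; apply: leq_trans (size_scale_leq _ _) _.
have hi := ltn_ord i.
apply: leq_trans (size_pk _) _.
  move/ltP: hi => ?; move/leP: jm => ?; apply/leP; nlia.
move/leP: jm => ?; apply/leP; nlia.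
Qed.

Lemma Isub j p : (j < m)%N -> I j.+1 p -> I j p.
Proof.
move=> jm [x [a [b [sa sb ->]]]].
rewrite big_ord_recl; apply: ID; last first.
  by apply: Ig; apply: leq_trans sb _; rewrite leq_sub2l.
apply: ID; last first.
  by apply: If; apply: leq_trans sa _; rewrite leq_sub2l.
apply: ID.
  apply: IZ; rewrite /pk; apply: IB.
    apply: If; apply: leq_trans (size_gk _) _.
    move/ltP: jm => ?; rewrite /=; apply/leP; nlia.
  apply: Ig; apply: leq_trans (size_fk _) _.
  move/ltP: jm => ?; move/leP: hmn => ?; rewrite /=; apply/leP; nlia.
apply: Isum => i; apply: IZ.
have -> : (m - j.+1 + lift ord0 i = m - j + i)%N.
  rewrite lift0 /=; move/ltP: jm => ?; nlia.
exact: Ip.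
Qed.

Definition Q j (al be : R) : {poly R} :=
  (al *: 'X^(m - j - 1)) * f + (be *: 'X^(n - j - 1)) * g.

Lemma size_sX (c : R) k : (size (c *: 'X^k) <= k.+1)%N.
Proof. by apply: leq_trans (size_scale_leq _ _) _; rewrite size_polyXn. Qed.

Lemma IQ j al be : (j < m)%N -> I j (Q j al be).
Proof.
move=> jm; apply: ID.
  apply: If; apply: leq_trans (size_sX _ _) _; move/ltP: jm => ?; apply/leP; nlia.
apply: Ig; apply: leq_trans (size_sX _ _) _; move/ltP: jm => ?; move/leP: hmn => ?.
apply/leP; nlia.
Qed.

Lemma coefQ j al be : (j < m)%N ->
  (Q j al be)`_(m + n - j - 1) = al * f`_n + be * g`_m.
Proof.
move=> jm; rewrite /Q coefD -!scalerAl !coefZ !coefXnM.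
have h1 : (m + n - j - 1 < m - j - 1)%N = false.
  apply/negbTE; rewrite -leqNgt; move/ltP: jm => ?; apply/leP; nlia.
have h2 : (m + n - j - 1 < n - j - 1)%N = false.
  apply/negbTE; rewrite -leqNgt; move/ltP: jm => ?; apply/leP; nlia.
have h3 : (m + n - j - 1 - (m - j - 1) = n)%N.
  move/ltP: jm => ?; move/leP: hmn => ?; nlia.
have h4 : (m + n - j - 1 - (n - j - 1) = m)%N.
  move/ltP: jm => ?; move/leP: hmn => ?; nlia.
by rewrite h1 h2 h3 h4.
Qed.

Lemma QZ c j al be : c *: Q j al be = Q j (c * al) (c * be).
Proof. by rewrite /Q scalerDr !scalerAl !scalerA. Qed.

Lemma Idec j p : (j < m)%N -> I j p ->
  exists al be q, I j.+1 q /\ p = q + Q j al be.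
Proof.
move=> jm [x [a [b [sa sb ->]]]].
exists a`_(m - j - 1), b`_(n - j - 1).
exists (\sum_(i < j) x i *: pk f g n m (m - j + i)
         + (a - a`_(m - j - 1) *: 'X^(m - j - 1)) * f
         + (b - b`_(n - j - 1) *: 'X^(n - j - 1)) * g).
split; last first.
  by rewrite /Q addrACA -[X in _ = X + _]addrA -!mulrDl !subrK.
apply: ID; last first.
  apply: Ig; apply/leq_sizeP => i hi; rewrite coefB coefZ coefXn.
  case: eqP => [->|ne]; first by rewrite mulr1 subrr.
  rewrite mulr0 subr0; apply: (leq_sizeP _ _ sb).
  move/leP: hi => ?; move/ltP: jm => ?; move/leP: hmn => ?; apply/leP; nlia.
apply: ID; last first.
  apply: If; apply/leq_sizeP => i hi; rewrite coefB coefZ coefXn.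
  case: eqP => [->|ne]; first by rewrite mulr1 subrr.
  rewrite mulr0 subr0; apply: (leq_sizeP _ _ sa).
  move/leP: hi => ?; move/ltP: jm => ?; apply/leP; nlia.
apply: Isum => i; apply: IZ.
have hi := ltn_ord i.
have -> : (m - j + i = m - j.+1 + i.+1)%N by move/ltP: jm => ?; nlia.
exact: Ip.
Qed.

Lemma zm (V : zmodType) (A B C D : V) : A - B = C + A - (D + B) - C + D.
Proof. by rewrite opprD (addrC C A) (addrAC (A + C)) addrK addrAC -addrA addNKr. Qed.

Lemma Iq0 j : (j < m)%N -> I j.+1 (Q j g`_m (- f`_n)).
Proof.
move=> jm.
have Hp := Ip (j:=j.+1) (i:=0) (ltn0Sn j); rewrite addn0 in Hp.
have km : (m - j.+1 <= m)%N by rewrite leq_subr.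
set k := (m - j.+1)%N in Hp km.
have Egk : gk g m k = \sum_(i < k) g`_(m - k + i) *: 'X^i + g`_m *: 'X^k.
  by rewrite /gk big_ord_recr /= subnK.
have e1 : (m - k + (n - m + k) = n)%N.
  rewrite /k; move/ltP: jm => ?; move/leP: hmn => ?; nlia.
have e2 : (n - m + k = n - j - 1)%N.
  rewrite /k; move/ltP: jm => ?; move/leP: hmn => ?; nlia.
have Efk : fk f n m k =
    \sum_(i < n - m + k) f`_(m - k + i) *: 'X^i + f`_n *: 'X^(n - j - 1).
  by rewrite /fk big_ord_recr /= e1 e2.
have e3 : (m - j - 1 = k)%N by rewrite /k; move/ltP: jm => ?; nlia.
have -> : Q j g`_m (- f`_n) =
    pk f g n m k - (\sum_(i < k) g`_(m - k + i) *: 'X^i) * f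
      + (\sum_(i < n - m + k) f`_(m - k + i) *: 'X^i) * g.
  by rewrite /Q /pk Egk Efk !mulrDl e3 scaleNr mulNr; exact: zm.
apply: ID; [apply: IB => //; apply: If | apply: Ig].
  rewrite -(poly_def _ (fun i => g`_(m - k + i))); exact: size_poly.
rewrite -(poly_def _ (fun i => f`_(m - k + i))); apply: leq_trans (size_poly _ _) _.
rewrite /k; move/ltP: jm => ?; move/leP: hmn => ?; apply/leP; nlia.
Qed.

End Aux.

Lemma solve2 (R : comNzRingType) (a b u v x y : R) :
  u * a + v * b = 1 -> x * a + y * b = 0 ->
  x = (x * v - y * u) * b /\ y = (x * v - y * u) * (- a).
Proof.
move=> H1 H2; split.
  apply/eqP; rewrite -subr_eq0; apply/eqP.
  transitivity (u * (x * a + y * b)); last by rewrite H2 mulr0.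
  rewrite -{1}[x]mulr1 -H1 mulrBl opprB mulrDr mulrDr.
  rewrite -!mulrA (mulrCA x u a) (mulrCA y u b) -addrA; congr (_ + _).
  by rewrite addrC subrK.
apply/eqP; rewrite -subr_eq0; apply/eqP.
transitivity (v * (x * a + y * b)); last by rewrite H2 mulr0.
rewrite -{1}[y]mulr1 -H1 mulrN opprK mulrBl mulrDr mulrDr.
by rewrite -!mulrA (mulrCA y v b) (mulrCA x v a) (mulrCA y u a) addrC addrA subrK.
Qed.

Lemma size_drop1 (R : comNzRingType) (p : {poly R}) N :
  (size p <= N.+1)%N -> p`_N = 0 -> (size p <= N)%N.
Proof.
move=> s0 c0; apply/leq_sizeP => i; rewrite leq_eqVlt => /orP [/eqP <- //|hi].
exact: (leq_sizeP _ _ s0).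
Qed.

Section Main.
Variable R : comNzRingType.
Variables (n m : nat) (f g : {poly R}).
Hypotheses (hmn : (m <= n)%N) (hf : (size f <= n.+1)%N) (hg : (size g <= m.+1)%N).
Variables (d a' b' u0 v0 : R).
Hypotheses (hdreg : forall x : R, x * d = 0 -> x = 0)
  (ha : f`_n = a' * d) (hb : g`_m = b' * d) (huv : u0 * a' + v0 * b' = 1).

Local Notation I := (im_psi f g n m).

Definition P j := Q n m f g j b' (- a').

Lemma ePj j : (j < m)%N -> (m + n - j.+1 = m + n - j - 1)%N.
Proof. by move/ltP => ?; nlia. Qed.

Lemma sizeQ j al be : (j < m)%N -> (size (Q n m f g j al be) <= (m + n - j - 1).+1)%N.
Proof.
move=> jm; have := Isize hmn hf hg (ltnW jm) (IQ hmn hf hg al be jm).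
move=> h; apply: leq_trans h _; move/ltP: jm => ?; apply/leP; nlia.
Qed.

Lemma Pamb j r : (j < m)%N -> (size (r *: P j) <= m + n - j.+1)%N.
Proof.
move=> jm; rewrite ePj //; apply: leq_trans (size_scale_leq _ _) _.
apply: size_drop1; first exact: sizeQ.
by rewrite coefQ // ha hb mulNr !mulrA (mulrC b' a') subrr.
Qed.

Lemma Pd j : (j < m)%N -> I j.+1 (d *: P j).
Proof.
move=> jm; rewrite /P QZ // (mulrC d b') -hb mulrN (mulrC d a') -ha.
exact: Iq0.
Qed.

Lemma exact1 j (v : {poly R}) : (j < m)%N -> (size v <= m + n - j.+1)%N ->
  (I j v <-> exists r, I j.+1 (v - r *: P j)).
Proof.
move=> jm hv; split.
  move=> /(Idec hmn hf hg jm) [al [be [q [Iq eq]]]].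
  have q0 : q`_(m + n - j - 1) = 0.
    apply: nth_default; rewrite -ePj //; exact: (Isize hmn hf hg jm Iq).
  have v0' : v`_(m + n - j - 1) = 0 by apply: nth_default; rewrite -ePj.
  rewrite eq coefD q0 add0r coefQ // ha hb !mulrA -mulrDl in v0'.
  have [e1 e2] := solve2 huv (hdreg v0').
  exists (al * v0 - be * u0).
  by rewrite eq /P QZ // -e1 -e2 addrK.
case=> r H; have := ID hmn hf hg (Isub hmn hf hg jm H) (IZ hmn hf hg r (IQ hmn hf hg b' (- a') jm)).
by rewrite subrK.
Qed.

Hypothesis hideal : forall r : R,
     (exists u v : R, r = u * f`_n + v * g`_m) <-> (exists w : R, r = w * d).

Lemma exact2 j (v : {poly R}) : (j < m)%N -> (size v <= m + n - j)%N ->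
  ((exists w, v`_(m + n - j - 1) = w * d) <->
   exists u : {poly R}, (size u <= m + n - j.+1)%N /\ I j (v - u)).
Proof.
move=> jm hv; split.
  move=> /hideal [al [be e]].
  exists (v - Q n m f g j al be); split; last by rewrite subKr; exact: IQ.
  rewrite ePj //; apply: size_drop1; last by rewrite coefB coefQ // e subrr.
  apply: leq_trans (size_polyD _ _) _; rewrite size_polyN geq_max sizeQ // andbT.
  by apply: leq_trans hv _; move/ltP: jm => ?; apply/leP; nlia.
case=> u [su H]; have [al [be [q [Iq eq]]]] := Idec hmn hf hg jm H.
apply/hideal; exists al, be.
have q0 : q`_(m + n - j - 1) = 0.
  apply: nth_default; rewrite -ePj //; exact: (Isize hmn hf hg jm Iq).
have u0' : u`_(m + n - j - 1) = 0 by apply: nth_default; rewrite -ePj.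
have := congr1 (fun p : {poly R} => p`_(m + n - j - 1)) eq.
by rewrite /= coefB u0' subr0 coefD q0 add0r coefQ.
Qed.

End Main.

Section Lin.
Variable R : comNzRingType.

Definition scl (P : {poly R}) (r : R^o) : {poly R} := r *: P.
Lemma scl_lin P : linear (scl P).
Proof. by move=> a x y; rewrite /scl scalerDl scalerA. Qed.
HB.instance Definition _ P := GRing.isLinear.Build R R^o {poly R} _ (scl P) (scl_lin P).

Definition cf (N : nat) (p : {poly R}) : R^o := p`_N.
Lemma cf_lin N : linear (cf N).
Proof. by move=> a x y; rewrite /cf coefD coefZ. Qed.
HB.instance Definition _ N := GRing.isLinear.Build R {poly R} R^o _ (cf N) (cf_lin N).

Definition idp (p : {poly R}) : {poly R} := p.
Lemma idp_lin : linear idp.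
Proof. by []. Qed.
HB.instance Definition _ := GRing.isLinear.Build R {poly R} {poly R} _ idp idp_lin.
End Lin.


Section Iso.
Variable R : comNzRingType.
Variables (n m : nat) (f g : {poly R}).
Hypotheses (hmn : (m <= n)%N) (hf : (size f <= n.+1)%N) (hg : (size g <= m.+1)%N).
Variables (d a' b' u0 v0 : R).
Hypotheses (hdreg : forall x : R, x * d = 0 -> x = 0)
  (ha : f`_n = a' * d) (hb : g`_m = b' * d) (huv : u0 * a' + v0 * b' = 1).
Hypothesis hd1 : d = 1.

Local Notation I := (im_psi f g n m).

Definition rho j (p : {poly R}) := p - p`_(m + n - j - 1) *: Q n m f g j u0 v0.

Fixpoint redn c j p := match c with 0 => p | c'.+1 => redn c' j.+1 (rho j p) end.

Lemma rho_lin j a p q : rho j (a *: p + q) = a *: rho j p + rho j q.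
Proof.
rewrite /rho coefD coefZ scalerDl -scalerA scalerBr opprD addrACA.
by [].
Qed.

Lemma redn_lin c j : linear (redn c j).
Proof.
elim: c j => [|c IH] j a p q //=.
by rewrite rho_lin IH.
Qed.

HB.instance Definition _ c j :=
  GRing.isLinear.Build R {poly R} {poly R} _ (redn c j) (redn_lin c j).

Lemma topQ j : (j < m)%N -> (Q n m f g j u0 v0)`_(m + n - j - 1) = 1.
Proof. by move=> jm; rewrite coefQ // ha hb hd1 !mulr1. Qed.

Lemma eN j : (j < m)%N -> (m + n - j = (m + n - j - 1).+1)%N.
Proof. by move/ltP => ?; nlia. Qed.

Lemma Iup j (v : {poly R}) : (j < m)%N -> (size v <= m + n - j.+1)%N -> I j v -> I j.+1 v.
Proof.
move=> jm hv Iv.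
have [r H] := (exact1 hmn hf hg hdreg ha hb huv jm hv).1 Iv.
have Hd := Pd hmn hf hg hdreg ha hb huv jm; rewrite hd1 scale1r in Hd.
by have := ID hmn hf hg H (IZ hmn hf hg r Hd); rewrite subrK.
Qed.

Lemma rho_size j (p : {poly R}) : (j < m)%N -> (size p <= m + n - j)%N ->
  (size (rho j p) <= m + n - j.+1)%N.
Proof.
move=> jm hp; rewrite (ePj hmn hf hg hdreg ha hb huv jm); apply: size_drop1.
  apply: leq_trans (size_polyD _ _) _; rewrite size_polyN geq_max -eN // hp /=.
  apply: leq_trans (size_scale_leq _ _) _; rewrite eN //.
  exact: (sizeQ hmn hf hg hdreg ha hb huv).
by rewrite coefB coefZ topQ // mulr1 subrr.
Qed.

Lemma rho_I j (p : {poly R}) : (j < m)%N -> I j (p - rho j p).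
Proof. by move=> jm; rewrite /rho subKr; apply: IZ => //; apply: IQ. Qed.

Lemma rho_id j (p : {poly R}) : (j < m)%N -> (size p <= m + n - j.+1)%N -> rho j p = p.
Proof.
move=> jm hp; rewrite /rho nth_default ?scale0r ?subr0 //.
by rewrite -(ePj hmn hf hg hdreg ha hb huv jm).
Qed.

Lemma R1 c j (p : {poly R}) : (j + c <= m)%N -> (size p <= m + n - j)%N ->
  (size (redn c j p) <= m + n - (j + c))%N.
Proof.
elim: c j p => [|c IH] j p /= jc hp; first by rewrite addn0.
have jm : (j < m)%N by apply: leq_trans jc; rewrite addnS ltnS leq_addr.
rewrite -addSnnS; apply: IH; first by rewrite addSnnS.
exact: rho_size.
Qed.

Lemma R2 c j (p : {poly R}) : (j + c <= m)%N -> (size p <= m + n - j)%N -> I j p ->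
  I (j + c) (redn c j p).
Proof.
elim: c j p => [|c IH] j p /= jc hp Ip; first by rewrite addn0.
have jm : (j < m)%N by apply: leq_trans jc; rewrite addnS ltnS leq_addr.
rewrite -addSnnS; apply: IH; first by rewrite addSnnS.
  exact: rho_size.
apply: Iup => //; first exact: rho_size.
by rewrite -[rho j p](subKr p); apply: IB => //; apply: rho_I.
Qed.

Lemma R3 c j (p : {poly R}) : (j + c <= m)%N -> (size p <= m + n - j)%N ->
  I (j + c) (redn c j p) -> I j p.
Proof.
elim: c j p => [|c IH] j p /= jc hp; first by rewrite addn0.
have jm : (j < m)%N by apply: leq_trans jc; rewrite addnS ltnS leq_addr.
rewrite -addSnnS => H.
have H1 : I j.+1 (rho j p).
  by apply: (IH _ _ _ (rho_size jm hp)) => //; rewrite addSnnS.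
rewrite -[p](subrK (rho j p)); apply: ID => //; first exact: rho_I.
exact: Isub.
Qed.

Lemma R4 c j (p : {poly R}) : (j + c <= m)%N -> (size p <= m + n - (j + c))%N ->
  redn c j p = p.
Proof.
elim: c j p => [|c IH] j p //= jc hp.
have jm : (j < m)%N by apply: leq_trans jc; rewrite addnS ltnS leq_addr.
have hp1 : (size p <= m + n - j.+1)%N.
  apply: leq_trans hp _; apply: leq_sub2l; by rewrite addnS ltnS leq_addr.
rewrite rho_id //; apply: IH; rewrite addSnnS //.
Qed.

Lemma R5 c j (p : {poly R}) : (j + c <= m)%N -> (size p <= m + n - j)%N ->
  I j (p - redn c j p).
Proof.
elim: c j p => [|c IH] j p /= jc hp; first by rewrite subrr; apply: I0.
have jm : (j < m)%N by apply: leq_trans jc; rewrite addnS ltnS leq_addr.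
have -> : p - redn c j.+1 (rho j p) =
    (p - rho j p) + (rho j p - redn c j.+1 (rho j p)) by rewrite addrA subrK.
apply: ID => //; first exact: rho_I.
apply: Isub => //; apply: IH; rewrite ?addSnnS //; exact: rho_size.
Qed.

Lemma Isubs c k (p : {poly R}) : (k + c <= m)%N -> I (k + c) p -> I k p.
Proof.
elim: c k => [|c IH] k; first by rewrite addn0.
move=> kc H.
have km : (k < m)%N by apply: leq_trans kc; rewrite addnS ltnS leq_addr.
apply: Isub => //; apply: IH; rewrite addSnnS //.
Qed.

Lemma Iups c k (p : {poly R}) : (k + c <= m)%N -> (size p <= m + n - (k + c))%N ->
  I k p -> I (k + c) p.
Proof.
elim: c k => [|c IH] k; first by rewrite addn0.
move=> kc hp H.
have km : (k < m)%N by apply: leq_trans kc; rewrite addnS ltnS leq_addr.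
rewrite -addSnnS; apply: IH; rewrite ?addSnnS //.
apply: Iup => //; apply: leq_trans hp _; apply: leq_sub2l.
by rewrite addnS ltnS leq_addr.
Qed.

Lemma iso_all j k : (j <= m)%N -> (k <= m)%N ->
  qiso (coker_psi f g n m j) (coker_psi f g n m k).
Proof.
move=> jm km; case: (leqP j k) => hjk.
  have ek : k = (j + (k - j))%N by rewrite subnKC.
  exists (redn (k - j) j); split.
  - split => v /= hv.
      by rewrite {2}ek; apply: R1 => //; rewrite -ek.
    by move=> Iv; rewrite {1}ek; apply: R2 => //; rewrite -ek.
  - by move=> v /= hv H; apply: (R3 (c := k - j)) => //; rewrite -ek.
  - move=> u /= hu; exists u; split.
      by apply: leq_trans hu _; apply: leq_sub2l.
    rewrite R4 ?subrr; [exact: I0 | rewrite -ek // | rewrite -ek //].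
have ej : j = (k + (j - k))%N by rewrite subnKC // ltnW.
exists (@idp R); split.
- split => v /= hv.
    by apply: leq_trans hv _; apply: leq_sub2l; apply: ltnW.
  by move=> Iv; apply: (Isubs (c := j - k)); rewrite -ej.
- by move=> v /= hv H; rewrite /idp ej; apply: Iups => //; rewrite -ej.
- move=> u /= hu; exists (redn (j - k) k u); split.
    by rewrite {2}ej; apply: R1 => //; rewrite -ej.
  by apply: R5 => //; rewrite -ej.
Qed.

End Iso.

Unset Implicit Arguments.

Theorem theorem5p1 (R : comNzRingType) (n m : nat) (f g : {poly R}) (d : R)
  (hm : (1 <= m)%N) (hmn : (m <= n)%N)
  (hf : (size f <= n.+1)%N) (hg : (size g <= m.+1)%N)
  (hd0 : d != 0) (hdreg : forall x : R, x * d = 0 -> x = 0)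
  (hideal : forall r : R,
     (exists u v : R, r = u * f`_n + v * g`_m) <-> (exists w : R, r = w * d)) :
  (forall j : nat, (j < m)%N ->
     exists (al : {linear R^o -> {poly R}})
            (be : {linear {poly R} -> {poly R}})
            (ga : {linear {poly R} -> R^o}),
       [/\ qmap (R_mod d) (coker_psi f g n m j.+1) al,
           qmap (coker_psi f g n m j.+1) (coker_psi f g n m j) be
         & qmap (coker_psi f g n m j) (R_mod d) ga] /\
       [/\ qexact_at (R_mod d) (coker_psi f g n m j.+1) (coker_psi f g n m j) al be,
           qexact_at (coker_psi f g n m j.+1) (coker_psi f g n m j) (R_mod d) be ga
         & qsurj (coker_psi f g n m j) (R_mod d) ga])
  /\
  (d = 1 -> forall j k : nat, (j <= m)%N -> (k <= m)%N ->
     qiso (coker_psi f g n m j) (coker_psi f g n m k)).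
Proof.
have [a' ha] : exists a', f`_n = a' * d.
  by apply/hideal; exists 1, 0; rewrite mul1r mul0r addr0.
have [b' hb] : exists b', g`_m = b' * d.
  by apply/hideal; exists 0, 1; rewrite mul1r mul0r add0r.
have [u0 [v0 huv0]] : exists u v, d = u * f`_n + v * g`_m.
  by apply/hideal; exists 1; rewrite mul1r.
have huv : u0 * a' + v0 * b' = 1.
  apply/eqP; rewrite -subr_eq0; apply/eqP; apply: hdreg.
  by rewrite mulrBl mul1r mulrDl -!mulrA -ha -hb -huv0 subrr.
split; last first.
  by move=> hd1 j k jm km; exact: (iso_all hmn hf hg hdreg ha hb huv hd1 jm km).
move=> j jm.
exists (scl (P n m f g a' b' j)), (@idp R), (@cf R (m + n - j - 1)).
split; split.
- split => [r _|r _ [w ->]] /=.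
    exact: (Pamb hmn hf hg hdreg ha hb huv).
  rewrite /scl -scalerA; apply: IZ => //.
  exact: (Pd hmn hf hg hdreg ha hb huv).
- split => v /= hv.
    by apply: leq_trans hv _; apply: leq_sub2l.
  by move=> Iv; apply: Isub.
- split => // v /= hv Iv.
  apply/(exact2 hmn hf hg hdreg ha hb huv hideal jm hv).
  by exists 0; rewrite size_poly0 subr0.
- move=> v /= hv; rewrite /idp (exact1 hmn hf hg hdreg ha hb huv jm hv).
  by split => [[r H]|[r [_ H]]]; exists r.
- by move=> v /= hv; rewrite /cf /idp; exact: (exact2 hmn hf hg hdreg ha hb huv hideal jm hv).
- move=> u _; exists ((u : R) *: ('X^(m + n - j - 1) : {poly R})); split.
    apply: leq_trans (size_scale_leq _ _) _; rewrite size_polyXn.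
    by move/ltP: jm => ?; apply/leP; nlia.
  exists 0; change ((u : R) - ((u : R) *: ('X^(m + n - j - 1) : {poly R}))`_(m + n - j - 1) = 0 * d).
  by rewrite coefZ coefXn eqxx mulr1 subrr mul0r.
Qed.
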